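(* Let $\mathit{Vee}$ be the graph with vertices $u_1,u_2,u_3$ and edges $(u_1,u_2),(u_1,u_3)$, and let $\vec C_3$ be the directed 3-cycle with vertices $v_1,v_2,v_3$ and edges $(v_1,v_2),(v_2,v_3),(v_3,v_1)$. Then $\hom(\mathit{Vee},T)\ge\hom(\vec C_3,T)$ for every graph $T$, and $\mathsf{HDE}(\mathit{Vee},\vec C_3)=1$.
   Context: Graphs are finite directed graphs (loops allowed); a homomorphism $F\to T$ is a vertex map sending edges to edges, and $\hom(F,T)$ is their number. For $F\to G$, $\mathsf{HDE}(F,G)=\sup\{c\in\mathbb R:\hom(F,T)\ge\hom(G,T)^c\text{ for all graphs }T\}$. *)

(* Defs.v *)
From Stdlib Require Import Reals.
From mathcomp Require Import all_boot.
Set Implicit Arguments. Unset Strict Implicit. Unset Printing Implicit Defensive.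

Definition hom (V W : finType) (eF : rel V) (eT : rel W) : nat :=
  #|[pred f : {ffun V -> W} | [forall x, forall y, eF x y ==> eT (f x) (f y)]]|.

(* The real power b^c for a natural base b and real exponent c, compared
   with a:  "a >= b^c", with the conventions 0^c = 0 for c > 0,
   0^0 = 1, and 0^c = +infinity for c < 0. *)
Definition ge_pow (a b : nat) (c : R) : Prop :=
  if b == 0%N then (Rlt (IZR 0) c \/ (c = (IZR 0) /\ (1 <= a)%N))
  else Rle (Rpower (INR b) c) (INR a).

Definition HDE_set (VF VG : finType) (eF : rel VF) (eG : rel VG) (c : R) : Prop :=
  forall (W : finType) (eT : rel W), ge_pow (hom eF eT) (hom eG eT) c.

Definition HDE_is (VF VG : finType) (eF : rel VF) (eG : rel VG) (x : R) : Prop :=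
  is_lub (HDE_set eF eG) x.

(* Vee: vertices u1,u2,u3 = 0,1,2 with edges (u1,u2),(u1,u3). *)
Definition vee_edge : rel 'I_3 :=
  fun x y => (nat_of_ord x == 0%N) && ((nat_of_ord y == 1%N) || (nat_of_ord y == 2%N)).

Definition c3_edge : rel 'I_3 :=
  fun x y => [|| (nat_of_ord x == 0%N) && (nat_of_ord y == 1%N),
                 (nat_of_ord x == 1%N) && (nat_of_ord y == 2%N)
               | (nat_of_ord x == 2%N) && (nat_of_ord y == 0%N)].

(* Main.v *)
From Stdlib Require Import Reals Lra Lia Psatz ZArith.
From Pilot Require Import Defs.
From mathcomp Require Import all_boot.
Set Implicit Arguments. Unset Strict Implicit. Unset Printing Implicit Defensive.

Definition o0 : 'I_3 := @Ordinal 3 0 isT.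
Definition o1 : 'I_3 := @Ordinal 3 1 isT.
Definition o2 : 'I_3 := @Ordinal 3 2 isT.

Section Gen.
Variable W : finType.

Definition mk3 (a b c : W) : {ffun 'I_3 -> W} :=
  [ffun i : 'I_3 => if val i == 0 then a else if val i == 1 then b else c].

Lemma mk3E a b c : [/\ mk3 a b c o0 = a, mk3 a b c o1 = b & mk3 a b c o2 = c].
Proof. by rewrite !ffunE. Qed.

Lemma forall_I3 (P : pred 'I_3) : [forall x, P x] = [&& P o0, P o1 & P o2].
Proof.
apply/forallP/and3P => [H|[H0 H1 H2] [[|[|[|n]]] Hn]] //.
- by rewrite (_ : Ordinal Hn = o0) //; apply: val_inj.
- by rewrite (_ : Ordinal Hn = o1) //; apply: val_inj.
- by rewrite (_ : Ordinal Hn = o2) //; apply: val_inj.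
Qed.

Lemma card_ffun3 (P : pred {ffun 'I_3 -> W}) :
  #|P| = (\sum_a \sum_b \sum_c P (mk3 a b c))%N.
Proof.
rewrite -sum1_card.
rewrite (reindex (fun p : W * W * W => mk3 p.1.1 p.1.2 p.2)) /=; last first.
  exists (fun f : {ffun 'I_3 -> W} => (f o0, f o1, f o2)) => [[[a b] c]|f] _ /=.
    by rewrite !ffunE.
  apply/ffunP => -[[|[|[|n]]] Hn]; rewrite ffunE //=.
  - by rewrite (_ : Ordinal Hn = o0) //; apply: val_inj.
  - by rewrite (_ : Ordinal Hn = o1) //; apply: val_inj.
  - by rewrite (_ : Ordinal Hn = o2) //; apply: val_inj.
rewrite big_mkcond /=.
transitivity (\sum_(p : W * W * W) (P (mk3 p.1.1 p.1.2 p.2) : nat)).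
  by apply: eq_bigr => p _; rewrite /in_mem /=; case: (P _).
rewrite -(pair_bigA _ (fun ab c => (P (mk3 ab.1 ab.2 c) : nat))) /=.
rewrite -(pair_bigA _ (fun a b => \sum_c (P (mk3 a b c) : nat))) /=.
done.
Qed.
End Gen.

Section Counts.
Variables (W : finType) (e : rel W).

Lemma hom_c3 : hom c3_edge e =
  (\sum_a \sum_b \sum_c [&& e a b, e b c & e c a])%N.
Proof.
rewrite /hom card_ffun3; apply: eq_bigr => a _; apply: eq_bigr => b _;
  apply: eq_bigr => c _.
rewrite /= !forall_I3 /c3_edge /=.
have [-> -> ->] := mk3E a b c.
by case: (e a b); case: (e b c); case: (e c a).
Qed.

Lemma hom_vee : hom vee_edge e =
  (\sum_a \sum_b \sum_c (e a b && e a c))%N.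
Proof.
rewrite /hom card_ffun3; apply: eq_bigr => a _; apply: eq_bigr => b _;
  apply: eq_bigr => c _.
rewrite /= !forall_I3 /vee_edge /=.
have [-> -> ->] := mk3E a b c.
by case: (e a b); case: (e a c).
Qed.
End Counts.

Lemma c3c3 : hom c3_edge c3_edge = 3.
Proof. rewrite hom_c3. rewrite !big_ord_recl !big_ord0 /=; reflexivity. Qed.
Lemma veec3 : hom vee_edge c3_edge = 3.
Proof. rewrite hom_vee. rewrite !big_ord_recl !big_ord0 /=; reflexivity. Qed.

Set Implicit Arguments. Unset Strict Implicit. Unset Printing Implicit Defensive.

Open Scope Z_scope.
Lemma amgmZ (p q r : Z) : 0 <= p -> p <= q -> p <= r -> 3 * p * q * r <= p * p * r + q * q * p + r * r * q.
Proof.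
intros H0 H1 H2.
assert (0 <= p * (((q-p)-(r-p)) * ((q-p)-(r-p)))) by (apply Z.mul_nonneg_nonneg; [lia|apply Z.square_nonneg]).
assert (0 <= p * (q-p) * (r-p)) by (apply Z.mul_nonneg_nonneg; [apply Z.mul_nonneg_nonneg|]; lia).
assert (0 <= (q-p) * (r-p) * (r-p)) by (apply Z.mul_nonneg_nonneg; [apply Z.mul_nonneg_nonneg|]; lia).
nia.
Qed.

Close Scope Z_scope.
Lemma amgm_coq (p q r : nat) : (3 * p * q * r <= p * p * r + q * q * p + r * r * q)%N.
Proof.
apply/leP; rewrite -!multE -!plusE.
destruct (Nat.le_ge_cases p q), (Nat.le_ge_cases q r), (Nat.le_ge_cases p r).
pose proof (@amgmZ (Z.of_nat p) (Z.of_nat q) (Z.of_nat r) ltac:(lia) ltac:(lia) ltac:(lia)). 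
all: first [ pose proof (@amgmZ (Z.of_nat p) (Z.of_nat q) (Z.of_nat r) ltac:(lia) ltac:(lia) ltac:(lia)); lia
           | pose proof (@amgmZ (Z.of_nat q) (Z.of_nat r) (Z.of_nat p) ltac:(lia) ltac:(lia) ltac:(lia)); lia
           | pose proof (@amgmZ (Z.of_nat r) (Z.of_nat p) (Z.of_nat q) ltac:(lia) ltac:(lia) ltac:(lia)); lia ].
Qed.

From mathcomp Require Import all_boot all_order all_algebra.
Import Order.TTheory GRing.Theory Num.Theory.
Local Open Scope ring_scope.

Lemma amgm_rat (a b c : nat) : (0 < a)%N -> (0 < b)%N -> (0 < c)%N ->
  3%:R <= c%:R / a%:R + a%:R / b%:R + b%:R / c%:R :> rat.
Proof.
move=> Ha Hb Hc.
have a0 : a%:R != 0 :> rat by rewrite pnatr_eq0 -lt0n.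
have b0 : b%:R != 0 :> rat by rewrite pnatr_eq0 -lt0n.
have c0 : c%:R != 0 :> rat by rewrite pnatr_eq0 -lt0n.
have P : 0 < (a * b * c)%:R :> rat by rewrite ltr0n !muln_gt0 Ha Hb Hc.
rewrite -(ler_pM2r P) (mulrDl (c%:R / a%:R + a%:R / b%:R)) (mulrDl (c%:R / a%:R)).
have key (x y z : rat) : y != 0 -> x / y * (y * z) = x * z by move=> ?; rewrite mulrA divfK.
have -> : c%:R / a%:R * (a * b * c)%:R = (c * c * b)%:R :> rat.
  rewrite -mulnA natrM key // !natrM. by rewrite mulrA mulrAC.
have -> : a%:R / b%:R * (a * b * c)%:R = (a * a * c)%:R :> rat.
  rewrite (_ : (a * b * c = b * (a * c))%N); last by rewrite mulnCA mulnA.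
  rewrite natrM key // !natrM. by rewrite mulrA.
have -> : b%:R / c%:R * (a * b * c)%:R = (b * b * a)%:R :> rat.
  rewrite (_ : (a * b * c = c * (a * b))%N); last by rewrite mulnC.
  rewrite natrM key // !natrM. by rewrite mulrA mulrC mulrA.
rewrite -!natrD -natrM ler_nat.
have := amgm_coq c a b.
by rewrite -!mulnA !(mulnC c) !mulnA.
Qed.

Lemma rot3 (W : finType) (F : W -> W -> W -> rat) :
  \sum_x \sum_y \sum_z F x y z = \sum_x \sum_y \sum_z F y z x.
Proof.
rewrite [RHS]exchange_big; apply: eq_bigr => y _; by rewrite exchange_big.
Qed.

Section Main.
Variables (W : finType) (e : rel W).

Definition dg x : nat := (\sum_y (e x y : nat))%N.
Definition tc x y : nat := (\sum_z ((e y z && e z x) : nat))%N.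
Definition tri x y z : bool := [&& e x y, e y z & e z x].

Lemma tc_pos x y z : tri x y z -> (0 < tc x y)%N.
Proof.
by move=> /and3P[h1 h2 h3]; rewrite /tc (bigD1 z) //= h2 h3 add1n.
Qed.

Lemma tc_le x y : (tc x y <= dg y)%N.
Proof. by rewrite /tc /dg; apply: leq_sum => z _; case: (e y z); case: (e z x). Qed.

Lemma sum_tri x y : (\sum_z (tri x y z : nat) = (e x y : nat) * tc x y)%N.
Proof.
rewrite /tc /tri; case: (e x y) => /=; first by rewrite mul1n.
by rewrite mul0n big1.
Qed.

Let F x y z : rat := (tri x y z)%:R * ((tc z x)%:R / (tc x y)%:R).

Lemma step1 : \sum_x \sum_y \sum_z (tri x y z)%:R * 3%:R <=
   \sum_x \sum_y \sum_z (F x y z + F y z x + F z x y).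
Proof.
apply: ler_sum => x _; apply: ler_sum => y _; apply: ler_sum => z _.
rewrite /F.
have Eyzx : tri y z x = tri x y z by rewrite /tri; case: (e x y); case: (e y z); case: (e z x).
have Ezxy : tri z x y = tri x y z by rewrite /tri; case: (e x y); case: (e y z); case: (e z x).
rewrite Eyzx Ezxy -!mulrDr.
case H: (tri x y z); last by rewrite !mul0r.
rewrite !mul1r.
apply: amgm_rat; [exact: tc_pos H | |].
- by apply: (@tc_pos _ _ x); rewrite Eyzx.
- by apply: (@tc_pos _ _ y); rewrite Ezxy.
Qed.

Lemma step2 : \sum_x \sum_y \sum_z (F x y z + F y z x + F z x y) =
   3%:R * \sum_x \sum_y \sum_z F x y z.
Proof.
have E1 : \sum_x \sum_y \sum_z F y z x = \sum_x \sum_y \sum_z F x y z by rewrite -rot3.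
have E2 : \sum_x \sum_y \sum_z F z x y = \sum_x \sum_y \sum_z F x y z.
  by rewrite -E1 -rot3.
rewrite -E1 in E2.
transitivity (\sum_x \sum_y \sum_z F x y z + \sum_x \sum_y \sum_z F y z x +
    \sum_x \sum_y \sum_z F z x y).
  rewrite -!big_split; apply: eq_bigr => x _.
  rewrite -!big_split; apply: eq_bigr => y _.
  by rewrite -!big_split.
by rewrite E2 E1 mulr_natl !mulrS mulr0n addr0 addrA.
Qed.

Lemma step3 : \sum_x \sum_y \sum_z F x y z <=
   \sum_x \sum_y ((e x y : nat) * dg x)%:R.
Proof.
apply: ler_sum => x _; apply: ler_sum => y _.
apply: (@le_trans _ _ (\sum_z (tri x y z)%:R * ((dg x)%:R / (tc x y)%:R))).
  apply: ler_sum => z _; rewrite /F.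
  case H: (tri x y z); last by rewrite !mul0r.
  rewrite !mul1r; apply: ler_wpM2r; first by rewrite invr_ge0 ler0n.
  by rewrite ler_nat tc_le.
rewrite -big_distrl /= -natr_sum sum_tri natrM.
case: (tc x y =P 0%N) => [->|/eqP nz]; first by rewrite !mulr0 mul0r.
rewrite -mulrA [(tc x y)%:R * _]mulrC divfK ?natrM //.
by rewrite pnatr_eq0.
Qed.
End Main.

Lemma main_ineq (W : finType) (e : rel W) :
  (\sum_a \sum_b \sum_c ([&& e a b, e b c & e c a] : nat) <=
   \sum_a \sum_b \sum_c ((e a b && e a c) : nat))%N.
Proof.
have EV : (\sum_a \sum_b \sum_c ((e a b && e a c) : nat) =
           \sum_a \sum_b ((e a b : nat) * dg e a))%N.
  apply: eq_bigr => a _; apply: eq_bigr => b _; rewrite /dg.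
  case: (e a b) => /=; first by rewrite mul1n.
  by rewrite mul0n big1.
rewrite EV -(ler_nat rat) -(@ler_pM2r _ 3%:R) ?ltr0n //.
have L : (\sum_a \sum_b \sum_c ([&& e a b, e b c & e c a] : nat))%:R * 3%:R =
   \sum_x \sum_y \sum_z ((tri e x y z)%:R * 3%:R) :> rat.
  rewrite !natr_sum mulr_suml; apply: eq_bigr => a _.
  rewrite !natr_sum mulr_suml; apply: eq_bigr => b _.
  by rewrite !natr_sum mulr_suml.
rewrite L; apply: (le_trans (step1 e)).
rewrite step2 mulrC ler_pM2r ?ltr0n //.
apply: (le_trans (step3 e)).
rewrite natr_sum; apply: ler_sum => a _.
by rewrite natr_sum.
Qed.

Close Scope ring_scope.
Import Pilot.Defs.

Lemma part1 (W : finType) (eT : rel W) : (hom c3_edge eT <= hom vee_edge eT)%N.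
Proof. by rewrite hom_c3 hom_vee; apply: main_ineq. Qed.

Lemma Rpow3 (c : R) : Rle (Rpower (INR 3) c) (INR 3) -> Rle c (IZR 1).
Proof.
intros H. destruct (Rle_or_lt c 1) as [h|h]; [exact h|].
exfalso.
assert (Rlt (Rpower (INR 3) 1) (Rpower (INR 3) c)).
{ apply Rpower_lt; [simpl; lra | exact h]. }
rewrite Rpower_1 in H0; [|simpl; lra]. lra.
Qed.

Theorem mainTheorem7 :
  (forall (W : finType) (eT : rel W), (hom c3_edge eT <= hom vee_edge eT)%N)
  /\ HDE_is vee_edge c3_edge (IZR 1).
Proof.
split; first exact: part1.
split.
- move=> c Hc. have := Hc _ c3_edge. rewrite /ge_pow c3c3 veec3 /=.
  exact: Rpow3.
- move=> b Hb; apply: Hb => W eT; rewrite /ge_pow.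
  have [H0|nz] := eqVneq (hom c3_edge eT) 0%N.
    left; exact: Rlt_0_1.
  rewrite Rpower_1; last first.
    apply lt_0_INR; apply/ssrnat.ltP; by rewrite lt0n.
  apply le_INR; apply/ssrnat.leP; exact: part1.
Qed.
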